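(* Let ${\cal P}={\cal P}_{in}\cup{\cal P}_{out}$, let $\gamma$ be an assumption formula, let $D$ be a flagging monitor over $2^{{\cal P}_{in}}$, and let $\pi=\gamma\rightarrow\pi'$ where either $\pi'=D{:}\phi$ with $\phi$ an LTL formula (simple trigger), or $\pi'=(D;\varphi)^*$ with $\varphi$ a co-safety LTL formula (repeating trigger). Let $t(\pi)$ denote $\gamma\rightarrow\phi$ in the first case and $\gamma\rightarrow\varphi$ in the second. Let $C_{t(\pi)}$ be a Mealy machine that realises $t(\pi)$ in the simple-trigger case, and that tightly realises $t(\pi)$ in the repeating-trigger case. Then there is a Mealy machine (built from $D$ and $C_{t(\pi)}$) that realises $\pi$.
   Context: Traces $\sigma=\sigma_0\sigma_1\cdots$ have letters $\sigma_i\subseteq{\cal P}$; $\sigma_{i,j}=\sigma_i\cdots\sigma_j$, $\sigma_{i,\infty}$ the suffix from $i$. LTL: $\phi ::= \mathit{tt}\mid\mathit{ff}\mid e\mid\neg e\mid\phi\wedge\phi\mid\phi\vee\phi\mid X\phi\mid\phi U\phi\mid G\phi$, standard infinite-trace semantics; co-safety: no $G$. Finite semantics of co-safety formulas on $\sigma_{i,j}$ ($j<\infty$): atoms/Booleans at position $i$; $X\varphi$ iff $j>i$ and $\sigma_{i+1,j}\vdash\varphi$; $\varphi U\psi$ iff some $l\in[i,j]$ has $\sigma_{l,j}\vdash\psi$ and $\sigma_{k,j}\vdash\varphi$ for $k\in[i,l)$. Tight satisfaction $\sigma_{i,j}\Vdash\varphi$: $\sigma_{i,j}\vdash\varphi$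 and $\sigma_{i,k}\not\vdash\varphi$ for all $i\le k<j$. Assumptions: $\alpha ::= \mathit{tt}\mid\mathit{ff}\mid a\mid\neg\alpha\mid\alpha\wedge\alpha\mid\alpha\vee\alpha$; $\beta ::= \alpha\mid X\alpha\mid\beta\wedge\beta\mid\beta\vee\beta$; $\gamma ::= G\beta\mid GF\alpha\mid\gamma\wedge\gamma$. Flagging monitor over $\Sigma=2^{{\cal P}_{in}}$: $D=\langle \Sigma, \mathbb{V}, \Theta, Q, \theta_0, q_0, F, \perp, \rightarrow\rangle$ with typed variables $\mathbb{V}$ (arbitrary domains), valuations $\Theta$, finite states $Q$, initial valuation $\theta_0$, initial state $q_0$, flagging states $F\subseteq Q\setminus\{q_0\}$, sink $\perp$, deterministic transitions $q\xrightarrow{g\mapsto a}q'$ ($q\ne\perp$), guards $g:\Sigma\times\Theta\to\{\mathit{true},\mathit{false}\}$, actions $a:\Sigma\times\Theta\to\Theta$. Semantics on $(q,\theta)$ reading $E$: (1) if $q\notin F\cup\{\perp\}$ and a transition from $q$ has true guard, take it and set the valuation to $a(E,\theta)$; (2) if $q\notin F\cup\{\perp\}$ and no guard holds, stay; (3) $\perp$ stays; (4) a state in $F$ moves to $\perp$. On traces over $2^{\cal P}$ the monitor reads $\sigma_i\cap{\cal P}_{in}$. $\sigma_{i,j}\Vdash D$ iff the run from $(q_0,\theta_0)$ on $\sigma_i,\dots,\sigma_j$ ends in $F$. Semantics of triggers: $\sigma_{i,\infty}\vdash D{:}\phi$ iff for all $j\ge i$, $\sigma_{i,j}\Vdash D$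 implies $\sigma_{j,\infty}\vdash\phi$. $\sigma_{i,k}\vdash D;\varphi$ iff some $j\in[i,k]$ has $\sigma_{i,j}\Vdash D$ and $\sigma_{j,k}\Vdash\varphi$. Restart points: $0$ is one; if $p$ is one and $\sigma_{p,k}\vdash D;\varphi$ then $k+1$ is one. $\sigma\vdash(D;\varphi)^*$ iff for every restart point $p$ and every $i\ge p$ with $\sigma_{p,i}\Vdash D$ there is $k\ge i$ with $\sigma_{p,k}\vdash D;\varphi$. $\sigma\vdash\gamma\rightarrow\pi'$ iff $\sigma\vdash\gamma$ implies $\sigma_{0,\infty}\vdash\pi'$. Mealy machine: $C=\langle S,s_0,2^{{\cal P}_{in}},2^{{\cal P}_{out}},\rightarrow,F\rangle$, complete deterministic $\rightarrow:S\times2^{{\cal P}_{in}}\to2^{{\cal P}_{out}}\times S$, accepting states $F$. A run $s_0s_1\cdots$ with $s_i\xrightarrow{I_i/O_i}s_{i+1}$ produces $w$ with $w_i=I_i\cup O_i$; $C$ accepts a prefix $u$ if $s_{|u|}\in F$. $C$ realises a formula if every produced word satisfies it. $C$ tightly realises $\gamma\rightarrow\varphi$ ($\varphi$ co-safety) if it realises it and for each produced $w$ with $w\vdash\gamma$ there is a prefix $u$ of $w$ accepted by $C$, tightly satisfying $\varphi$, with no strict prefix of $u$ accepted by $C$. *)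

(* Defs.v *)
From mathcomp Require Import all_boot.
Set Implicit Arguments. Unset Strict Implicit. Unset Printing Implicit Defensive.

Section Defs.
Variables (Pin Pout : finType).

Definition letter := {set (Pin + Pout)}.
Definition trace := nat -> letter.
Definition ilet := {set Pin}.
Definition olet := {set Pout}.

Inductive ltl :=
| Ltt | Lff | Lat of (Pin + Pout) | Lnat of (Pin + Pout)
| Land of ltl & ltl | Lor of ltl & ltl
| LX of ltl | LU of ltl & ltl | LG of ltl.

Fixpoint cosafe (f : ltl) : bool :=
  match f with
  | Ltt | Lff | Lat _ | Lnat _ => true
  | Land a b | Lor a b | LU a b => cosafe a && cosafe b
  | LX a => cosafe a
  | LG _ => false
  end.

Fixpoint sat (s : trace) (i : nat) (f : ltl) : Prop :=
  match f with
  | Ltt => True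
  | Lff => False
  | Lat e => e \in s i
  | Lnat e => e \notin s i
  | Land a b => sat s i a /\ sat s i b
  | Lor a b => sat s i a \/ sat s i b
  | LX a => sat s i.+1 a
  | LU a b => exists l, i <= l /\ sat s l b /\ forall k, i <= k < l -> sat s k a
  | LG a => forall k, i <= k -> sat s k a
  end.

(* finite semantics of co-safety formulas: fsat s i j f <-> s_{i,j} |- f
   (the G case never occurs for co-safety formulas) *)
Fixpoint fsat (s : trace) (i j : nat) (f : ltl) : Prop :=
  match f with
  | Ltt => True
  | Lff => False
  | Lat e => e \in s i
  | Lnat e => e \notin s i
  | Land a b => fsat s i j a /\ fsat s i j b
  | Lor a b => fsat s i j a \/ fsat s i j b
  | LX a => i < j /\ fsat s i.+1 j a
  | LU a b => exists l, i <= l <= j /\ fsat s l j b /\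
                forall k, i <= k < l -> fsat s k j a
  | LG _ => False
  end.

Definition tsat (s : trace) (i j : nat) (f : ltl) : Prop :=
  fsat s i j f /\ forall k, i <= k < j -> ~ fsat s i k f.

Inductive alpha :=
| Att | Aff | Aat of Pin | Anot of alpha | Aand of alpha & alpha | Aor of alpha & alpha.
Inductive beta :=
| Bal of alpha | BX of alpha | Band of beta & beta | Bor of beta & beta.
Inductive gamma :=
| GG of beta | GGF of alpha | Gand of gamma & gamma.

Fixpoint asat (E : letter) (a : alpha) : Prop :=
  match a with
  | Att => True
  | Aff => False
  | Aat p => inl p \in E
  | Anot b => ~ asat E b
  | Aand b c => asat E b /\ asat E c
  | Aor b c => asat E b \/ asat E c
  end.

Fixpoint bsat (s : trace) (i : nat) (b : beta) : Prop :=
  match b with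
  | Bal a => asat (s i) a
  | BX a => asat (s i.+1) a
  | Band b c => bsat s i b /\ bsat s i c
  | Bor b c => bsat s i b \/ bsat s i c
  end.

Fixpoint gsat (s : trace) (i : nat) (g : gamma) : Prop :=
  match g with
  | GG b => forall k, i <= k -> bsat s k b
  | GGF a => forall k, i <= k -> exists l, k <= l /\ asat (s l) a
  | Gand g1 g2 => gsat s i g1 /\ gsat s i g2
  end.

(* mV is the type of valuations Theta of the typed variables. A transition
   q --g|->a--> q' is stored as ((g, a), q') in mtrans q. *)
Unset Implicit Arguments.
Record monitor := Monitor {
  mQ : finType;
  mV : Type;
  mq0 : mQ;
  mth0 : mV;
  mF : {set mQ};
  mbot : mQ;
  mtrans : mQ -> seq ((ilet -> mV -> bool) * (ilet -> mV -> mV) * mQ);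
  mq0F : mq0 \notin mF;
  mbotF : mbot \notin mF;
  mbot_trans : mtrans mbot = [::];
  mdet : forall q E th, count (fun t => t.1.1 E th) (mtrans q) <= 1
}.


Definition dstep (D : monitor) (st : mQ D * mV D) (E : ilet) : mQ D * mV D :=
  let: (q, th) := st in
  if q == mbot D then (q, th)
  else if q \in mF D then (mbot D, th)
  else match [seq t <- mtrans D q | t.1.1 E th] with
       | t :: _ => (t.2, t.1.2 E th)
       | [::] => (q, th)
       end.

(* the monitor reads sigma_i ∩ P_in *)
Definition inp (x : letter) : ilet := [set a | inl a \in x].

(* configuration after reading sigma_i, ..., sigma_{i+n-1} from (q0, theta0) *)
Fixpoint runD (D : monitor) (s : trace) (i n : nat) : mQ D * mV D :=
  match n with
  | 0 => (mq0 D, mth0 D)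
  | n'.+1 => @dstep D (runD D s i n') (inp (s (i + n')))
  end.

Definition dflag (D : monitor) (s : trace) (i j : nat) : Prop :=
  i <= j /\ (runD D s i (j - i).+1).1 \in mF D.

Definition simple_sat (D : monitor) (phi : ltl) (s : trace) (i : nat) : Prop :=
  forall j, dflag D s i j -> sat s j phi.

Definition dseq (D : monitor) (phi : ltl) (s : trace) (i k : nat) : Prop :=
  exists j, i <= j <= k /\ dflag D s i j /\ tsat s j k phi.

Inductive restart (D : monitor) (phi : ltl) (s : trace) : nat -> Prop :=
| restart0 : restart D phi s 0
| restartS p k : restart D phi s p -> dseq D phi s p k -> restart D phi s k.+1.

Definition rep_sat (D : monitor) (phi : ltl) (s : trace) : Prop :=
  forall p i, restart D phi s p -> p <= i -> dflag D s p i ->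
    exists k, i <= k /\ dseq D phi s p k.

Inductive trigger :=
| Simple of monitor & ltl
| Repeat of monitor & ltl.

Definition trig_wf (pi : trigger) : bool :=
  match pi with Simple _ _ => true | Repeat _ phi => cosafe phi end.

Definition spec_sat (g : gamma) (pi : trigger) (s : trace) : Prop :=
  gsat s 0 g ->
  match pi with
  | Simple D phi => simple_sat D phi s 0
  | Repeat D phi => rep_sat D phi s
  end.

Unset Implicit Arguments.
Record mealy := Mealy {
  cS : Type;
  cs0 : cS;
  ctrans : cS -> ilet -> olet * cS;
  cacc : cS -> bool
}.


Fixpoint cstate (C : mealy) (I : nat -> ilet) (n : nat) : cS C :=
  match n with
  | 0 => cs0 C
  | n'.+1 => (ctrans C (cstate C I n') (I n')).2
  end.

Definition cword (C : mealy) (I : nat -> ilet) : trace :=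
  fun n => [set (inl a : Pin + Pout) | a in I n]
           :|: [set (inr b : Pin + Pout) | b in (ctrans C (cstate C I n) (I n)).1].

Definition realises (C : mealy) (P : trace -> Prop) : Prop :=
  forall I : nat -> ilet, P (cword C I).

(* C tightly realises gamma -> phi (phi co-safety).  A prefix u of w of
   length m (m >= 1) is w_0..w_{m-1}; it is accepted iff s_m is accepting. *)
Definition tightly_realises (C : mealy) (g : gamma) (phi : ltl) : Prop :=
  realises C (fun s => gsat s 0 g -> sat s 0 phi) /\
  forall I : nat -> ilet, gsat (cword C I) 0 g ->
    exists m, 0 < m /\ cacc C (cstate C I m) /\ tsat (cword C I) 0 m.-1 phi /\
      forall m', m' < m -> ~~ cacc C (cstate C I m').

Definition realises_t (C : mealy) (g : gamma) (pi : trigger) : Prop :=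
  match pi with
  | Simple _ phi => realises C (fun s => gsat s 0 g -> sat s 0 phi)
  | Repeat _ phi => tightly_realises C g phi
  end.

End Defs.

(* Main.v *)
Require Import Defs.
From mathcomp Require Import all_boot.
From mathcomp Require Import zify.
From Stdlib Require Import FunctionalExtensionality.

Section Gen.
Variables (Pin Pout : finType).
Definition shift (s : trace Pin Pout) (a : nat) : trace Pin Pout := fun n => s (a + n).

Lemma sat_shift (s : trace Pin Pout) a f : forall i, sat s (a + i) f <-> sat (shift s a) i f.
Proof.
elim: f => //= [b IHb c IHc|b IHb c IHc|b IHb|b IHb c IHc|b IHb] i.
- by rewrite IHb IHc.
- by rewrite IHb IHc.
- by rewrite -IHb addnS.
- split.
  + move=> [l [h1 [h2 h3]]]. exists (l - a). split; first lia.
    split; first by rewrite -IHc subnKC //; lia.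
    move=> k hk. rewrite -IHb. apply: h3. lia.
  + move=> [l [h1 [h2 h3]]]. exists (a + l). split; first lia.
    split; first by rewrite IHc.
    move=> k hk. have -> : k = a + (k - a) by lia. rewrite IHb. apply: h3. lia.
- split.
  + move=> h k hk. rewrite -IHb. apply: h. lia.
  + move=> h k hk. have -> : k = a + (k - a) by lia. rewrite IHb. apply: h. lia.
Qed.

Lemma fsat_shift (s : trace Pin Pout) a f : forall i j, fsat s (a + i) (a + j) f <-> fsat (shift s a) i j f.
Proof.
elim: f => //= [b IHb c IHc|b IHb c IHc|b IHb|b IHb c IHc] i j.
- by rewrite IHb IHc.
- by rewrite IHb IHc.
- by rewrite -IHb addnS ltn_add2l.
- split.
  + move=> [l [h1 [h2 h3]]]. exists (l - a). split; first lia.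
    split; first by rewrite -IHc subnKC //; lia.
    move=> k hk. rewrite -IHb. apply: h3. lia.
  + move=> [l [h1 [h2 h3]]]. exists (a + l). split; first lia.
    split; first by rewrite IHc.
    move=> k hk. have -> : k = a + (k - a) by lia. rewrite IHb. apply: h3. lia.
Qed.

Lemma tsat_shift (s : trace Pin Pout) a f i j : tsat s (a + i) (a + j) f <-> tsat (shift s a) i j f.
Proof.
rewrite /tsat fsat_shift. split => -[h1 h2]; split => // k hk.
- rewrite -fsat_shift. apply: h2. lia.
- have -> : k = a + (k - a) by lia. rewrite fsat_shift. apply: h2. lia.
Qed.

Lemma fsat_ext (s1 s2 : trace Pin Pout) j f :
  (forall n, n <= j -> s1 n = s2 n) -> forall i, i <= j -> (fsat s1 i j f <-> fsat s2 i j f).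
Proof.
move=> E. elim: f => //= [e|e|b IHb c IHc|b IHb c IHc|b IHb|b IHb c IHc] i hi.
- by rewrite E.
- by rewrite E.
- by rewrite IHb // IHc.
- by rewrite IHb // IHc.
- split => -[h1 h2]; split => //; [rewrite -IHb | rewrite IHb] => //.
- split => -[l [h1 [h2 h3]]]; exists l; split => //.
  + split; first by rewrite -IHc //; lia.
    move=> k hk. rewrite -IHb; [by apply: h3|lia].
  + split; first by rewrite IHc //; lia.
    move=> k hk. rewrite IHb; [by apply: h3|lia].
Qed.

Lemma tsat_ext (s1 s2 : trace Pin Pout) j f :
  (forall n, n <= j -> s1 n = s2 n) -> tsat s1 0 j f -> tsat s2 0 j f.
Proof.
move=> E [h1 h2]; split; first by rewrite -(@fsat_ext s1 s2 j f E).
move=> k hk. rewrite -(@fsat_ext s1 s2 k f); [by apply: h2| |lia].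
move=> n hn; apply: E; lia.
Qed.

Lemma tsat_uniq (s : trace Pin Pout) i j k f : i <= j -> i <= k -> tsat s i j f -> tsat s i k f -> j = k.
Proof.
move=> hj hk [a1 a2] [b1 b2]. case: (ltngtP j k) => // h.
- by case: (b2 j); [lia|].
- by case: (a2 k); [lia|].
Qed.

Definition same_in (s1 s2 : trace Pin Pout) := forall n p, (inl p \in s1 n) = (inl p \in s2 n).

Lemma asat_ext (E1 E2 : letter Pin Pout) a : (forall p, (inl p \in E1) = (inl p \in E2)) -> asat E1 a <-> asat E2 a.
Proof. move=> h; elim: a => //= [p|b IH|b IHb c IHc|b IHb c IHc].
- by rewrite h.
- by rewrite IH.
- by rewrite IHb IHc.
- by rewrite IHb IHc.
Qed.

Lemma gsat_ext (s1 s2 : trace Pin Pout) g i : same_in s1 s2 -> gsat s1 i g <-> gsat s2 i g.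
Proof.
move=> h.
have hb : forall b k, bsat s1 k b <-> bsat s2 k b.
  elim=> /= [a|a|b IHb c IHc|b IHb c IHc] k.
  - exact: asat_ext (h _ ).
  - exact: asat_ext (h _).
  - by rewrite IHb IHc.
  - by rewrite IHb IHc.
elim: g i => /= [b|a|g1 IH1 g2 IH2] i.
- by split=> H k hk; [rewrite -hb|rewrite hb]; apply: H.
- split=> H k hk; have [l [hl1 hl2]] := H k hk; exists l; split => //; first [exact: (proj1 (@asat_ext (s1 l) (s2 l) a (h l)) hl2) | exact: (proj2 (@asat_ext (s1 l) (s2 l) a (h l)) hl2)].
- by rewrite IH1 IH2.
Qed.

Lemma gsat_suffix (s : trace Pin Pout) g i j : i <= j -> gsat s i g -> gsat s j g.
Proof.
move=> hij; elim: g => /= [b|a|g1 IH1 g2 IH2].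
- move=> H k hk; apply: H; lia.
- move=> H k hk; apply: H; lia.
- by move=> [/IH1 ? /IH2 ?].
Qed.

Lemma gsat_shift (s : trace Pin Pout) g a : gsat s 0 g -> gsat (shift s a) 0 g.
Proof.
move=> H. have {H} := @gsat_suffix s g 0 a (leq0n a) H.
elim: g => /= [b|al|g1 IH1 g2 IH2].
- move=> H k _. have := H (a + k) (leq_addr _ _).
  by elim: b {H} => /= [x|x|b IHb c IHc|b IHb c IHc]; rewrite /shift ?addnS //; tauto.
- move=> H k _. have [l [h1 h2]] := H (a + k) (leq_addr _ _).
  exists (l - a); split; first lia. by rewrite /shift subnKC //; lia.
- by move=> [/IH1 ? /IH2 ?].
Qed.

End Gen.

Section Mach.
Variables (Pin Pout : finType) (D : monitor Pin) (C : mealy Pin Pout) (rep : bool).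

Inductive mst := Mon of (mQ Pin D * mV Pin D) | Run of cS Pin Pout C.
Definition init : mQ Pin D * mV Pin D := (mq0 Pin D, mth0 Pin D).
Definition runC (c : cS Pin Pout C) (E : ilet Pin) : olet Pout * mst :=
  ((ctrans Pin Pout C c E).1,
   if rep && cacc Pin Pout C (ctrans Pin Pout C c E).2 then Mon init
   else Run (ctrans Pin Pout C c E).2).
Definition mstep (st : mst) (E : ilet Pin) : olet Pout * mst :=
  match st with
  | Mon d => if (dstep Pin D d E).1 \in mF Pin D then runC (cs0 Pin Pout C) E
             else (set0, Mon (dstep Pin D d E))
  | Run c => runC c E
  end.
Definition M : mealy Pin Pout := Mealy Pin Pout mst (Mon init) mstep (fun _ => false).

Lemma inl_cword X I n p : (inl p \in cword Pin Pout X I n) = (p \in I n).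
Proof.
rewrite /cword in_setU. case: (boolP (p \in I n)) => h.
- by apply/orP; left; apply: imset_f.
- apply/negbTE/negP => /orP [/imsetP [a ha [e]] | /imsetP [b _ //]]. by move: h; rewrite e ha.
Qed.

Lemma inp_cword X I n : inp Pin Pout (cword Pin Pout X I n) = I n.
Proof. by apply/setP => a; rewrite inE inl_cword. Qed.

Lemma same_in_cword X Y I a : same_in Pin Pout (shift Pin Pout (cword Pin Pout X I) a) (cword Pin Pout Y (fun n => I (a + n))).
Proof. by move=> n p; rewrite /shift !inl_cword. Qed.

Lemma dstep_F d E : d.1 \in mF Pin D -> (dstep Pin D d E).1 = mbot Pin D.
Proof.
case: d => q th /= h. have : q != mbot Pin D.
  by apply/eqP => e; move: (mbotF Pin D); rewrite -e h.
by move/negbTE => -> ; rewrite h.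
Qed.

Lemma dstep_bot d E : d.1 = mbot Pin D -> (dstep Pin D d E).1 = mbot Pin D.
Proof. by case: d => q th /= ->; rewrite eqxx. Qed.

Lemma runD_noF s p a b : (runD Pin Pout D s p a).1 \in mF Pin D -> a < b ->
  (runD Pin Pout D s p b).1 \notin mF Pin D.
Proof.
move=> hF. elim: b => // b IH. rewrite ltnS leq_eqVlt => /orP [/eqP <- | hab].
- by rewrite /= dstep_F // mbotF.
- suff : (runD Pin Pout D s p b.+1).1 = mbot Pin D by move=> ->; exact: mbotF.
  have : forall c, a < c -> (runD Pin Pout D s p c).1 = mbot Pin D.
    elim=> // c IHc. rewrite ltnS leq_eqVlt => /orP [/eqP <- | hc].
    + by rewrite /= dstep_F.
    + by rewrite /= dstep_bot // IHc.
  by apply; rewrite ltnS ltnW.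
Qed.

Variable I : nat -> ilet Pin.
Notation st := (cstate Pin Pout M I).
Notation s := (cword Pin Pout M I).

Lemma monA p : st p = Mon init -> forall t,
  (forall t', t' < t -> (runD Pin Pout D s p t'.+1).1 \notin mF Pin D) ->
  st (p + t) = Mon (runD Pin Pout D s p t).
Proof.
move=> h0. elim=> [|t IH] H; first by rewrite addn0.
rewrite addnS /= IH; last by move=> t' ht'; apply: H; rewrite ltnS ltnW.
rewrite inp_cword. have := H t (ltnSn t). rewrite /= inp_cword => /negbTE -> //.
Qed.

Lemma flag_start p j : st p = Mon init -> dflag Pin Pout D s p j ->
  st j = Mon (runD Pin Pout D s p (j - p)) /\
  (dstep Pin D (runD Pin Pout D s p (j - p)) (I j)).1 \in mF Pin D.
Proof.
move=> h0 [hpj hF]. split.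
- rewrite -{1}(subnKC hpj). apply: monA => // t' ht'.
  apply/negP => h. have hlt : t'.+1 < (j - p).+1 by rewrite ltnS. by rewrite (negbTE (runD_noF _ _ _ _ h hlt)) in hF.
- by move: hF; rewrite /= inp_cword subnKC.
Qed.

Section B.
Variables (j : nat) (d : mQ Pin D * mV Pin D).
Hypotheses (hj : st j = Mon d) (hF : (dstep Pin D d (I j)).1 \in mF Pin D).
Let I' := fun n => I (j + n).

Lemma B1 n : 0 < n ->
  (forall m', 0 < m' < n -> ~~ (rep && cacc Pin Pout C (cstate Pin Pout C I' m'))) ->
  st (j + n) = if rep && cacc Pin Pout C (cstate Pin Pout C I' n) then Mon init
               else Run (cstate Pin Pout C I' n).
Proof.
elim: n => // n IH _ H. case: n IH H => [|n] IH H.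
- by rewrite addn1 /= hj /= hF /runC /= /I' addn0.
- rewrite addnS [X in X = _]/= IH // => [|m' hm']; last by apply: H; lia.
  have := H n.+1 (ltac:(lia)) => /negbTE -> /=. done.
Qed.

Lemma B2 n :
  (forall m', 0 < m' <= n -> ~~ (rep && cacc Pin Pout C (cstate Pin Pout C I' m'))) ->
  s (j + n) = cword Pin Pout C I' n.
Proof.
move=> H. rewrite /cword. congr (_ :|: _).
case: n H => [|n] H.
- by rewrite addn0 /= hj /= hF /I' addn0.
- rewrite /= B1 // => [|m' hm']; last by apply: H; lia.
  by rewrite (negbTE (H n.+1 _)) //=.
Qed.
End B.
End Mach.

Arguments M {Pin Pout}. Arguments Mon {Pin Pout D C}. Arguments init {Pin D}.
Arguments flag_start {Pin Pout D C rep I p j}. Arguments B1 {Pin Pout D C rep I j d}.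
Arguments B2 {Pin Pout D C rep I j d}. Arguments shift {Pin Pout}. Arguments sat_shift {Pin Pout}.
Arguments gsat_shift {Pin Pout}. Arguments gsat_ext {Pin Pout}. Arguments same_in_cword {Pin Pout}.
Arguments tsat_shift {Pin Pout}. Arguments tsat_ext {Pin Pout}. Arguments tsat_uniq {Pin Pout}.

Lemma simple_case (Pin Pout : finType) (g : gamma Pin) (D : monitor Pin) (phi : ltl Pin Pout)
  (C : mealy Pin Pout) :
  realises Pin Pout C (fun s => gsat s 0 g -> sat s 0 phi) ->
  realises Pin Pout (M D C false) (spec_sat Pin Pout g (Simple Pin Pout D phi)).
Proof.
move=> HC I /= hg j hj.
have [hst hF] := flag_start (p:=0) (erefl _) hj.
set I' := fun n => I (j + n).
have E : shift (cword Pin Pout (M D C false) I) j = cword Pin Pout C I'.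
  apply: functional_extensionality => n. exact: (B2 hst hF).
have := HC I'. rewrite -E -(sat_shift) addn0. apply.
exact: gsat_shift.
Qed.

Lemma key (Pin Pout : finType) (g : gamma Pin) (D : monitor Pin) (phi : ltl Pin Pout)
  (C : mealy Pin Pout) I :
  tightly_realises Pin Pout C g phi ->
  gsat (cword Pin Pout (M D C true) I) 0 g ->
  forall p j, cstate Pin Pout (M D C true) I p = Mon init ->
  dflag Pin Pout D (cword Pin Pout (M D C true) I) p j ->
  exists m, 0 < m /\ tsat (cword Pin Pout (M D C true) I) j (j + m.-1) phi /\
    cstate Pin Pout (M D C true) I (j + m) = Mon init.
Proof.
move=> [_ HC] hg p j h0 hj.
have [hst hF] := flag_start h0 hj.
set I' := fun n => I (j + n).
have hg' : gsat (cword Pin Pout C I') 0 g.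
  rewrite -(gsat_ext _ _ g 0 (same_in_cword (M D C true) C I j)).
  exact: gsat_shift.
have [m [hm [hacc [ht hfirst]]]] := HC I' hg'.
exists m; split => //; split.
- have := (tsat_shift (cword Pin Pout (M D C true) I) j phi 0 m.-1).2; rewrite addn0; apply. apply: (tsat_ext (cword Pin Pout C I')) => // n hn.
  rewrite /shift (B2 hst hF) // => m' hm'. apply: hfirst. lia.
- rewrite (B1 hst hF) //= ?hacc // => m' hm'. apply: hfirst. lia.
Qed.

Lemma restart_fresh (Pin Pout : finType) (g : gamma Pin) (D : monitor Pin) (phi : ltl Pin Pout)
  (C : mealy Pin Pout) I :
  tightly_realises Pin Pout C g phi ->
  gsat (cword Pin Pout (M D C true) I) 0 g ->
  forall p, restart Pin Pout D phi (cword Pin Pout (M D C true) I) p ->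
  cstate Pin Pout (M D C true) I p = Mon init.
Proof.
move=> HC hg p. elim=> [|q k _ IH [j [hjk [hdj htj]]]]; first by [].
have [m [hm [ht hst]]] := key _ _ _ _ _ _ _ HC hg _ _ IH hdj.
have hjk2 : j <= k by case/andP: hjk.
have e := tsat_uniq _ _ _ _ _ (leq_addr _ _) hjk2 ht htj.
have -> : k.+1 = j + m by lia.
exact: hst.
Qed.

Lemma repeat_case (Pin Pout : finType) (g : gamma Pin) (D : monitor Pin) (phi : ltl Pin Pout)
  (C : mealy Pin Pout) :
  tightly_realises Pin Pout C g phi ->
  realises Pin Pout (M D C true) (spec_sat Pin Pout g (Repeat Pin Pout D phi)).
Proof.
move=> HC I /= hg p i hr hpi hi.
have h0 := restart_fresh _ _ _ _ _ _ _ HC hg _ hr.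
have [m [hm [ht _]]] := key _ _ _ _ _ _ _ HC hg _ _ h0 hi.
exists (i + m.-1); split; first exact: leq_addr.
exists i; split; first by rewrite hpi leq_addr.
by split.
Qed.

Theorem theorem4 (Pin Pout : finType) (g : gamma Pin) (pi : trigger Pin Pout)
    (C : mealy Pin Pout) :
  trig_wf Pin Pout pi -> realises_t Pin Pout C g pi ->
  exists M : mealy Pin Pout, realises Pin Pout M (spec_sat Pin Pout g pi).
Proof.
case: pi => [D phi|D phi] _ /= H.
- exists (M D C false). exact: simple_case.
- exists (M D C true). exact: repeat_case.
Qed.
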